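(* Let $R(s,t)=\mathbb{E}[I_n(f_s)I_n(f_t)]$ have finite 2D $\rho$-variation on $[0,1]^2$ for some $\rho\in[1,3/2)$ with $\|R\|^\rho_{\rho\text{-var};[s,t]\times[s,t]}\le|t-s|$ for all $0\le s\le t\le1$. Then for any $\varphi\in\mathcal{H}^{\hat\otimes n}$, the real function $\phi_t=\langle f_t,\varphi\rangle_{\mathcal{H}^{\otimes n}}$ has finite $\rho$-variation on $[0,1]$ and $$\|\phi\|_{\rho\text{-var};[0,1]}\le C\,\|\varphi\|_{\mathcal{H}^{\otimes n}}\sqrt{\|R\|_{\rho\text{-var};[0,1]^2}},$$ where $C$ is a constant not depending on $\varphi$.
   Context: $\mathcal{H}$ is a real separable Hilbert space with an isonormal Gaussian process $W$ on $(\Omega,\mathcal{F},\mathbb{P})$; $I_n$ is the $n$-th multiple Wiener–Itô integral ($n\ge1$ fixed), so $\mathbb{E}[I_n(f)I_n(g)]=n!\langle f,g\rangle_{\mathcal{H}^{\otimes n}}$; $(f_t)_{t\in[0,1]}\subset\mathcal{H}^{\hat\otimes n}$ (symmetric tensors). For $F:[0,1]^2\to\mathbb{R}$, $F([a,b]\times[c,d]):=F(b,d)-F(a,d)-F(b,c)+F(a,c)$ and $\|F\|_{\rho\text{-var};[s,t]\times[u,v]}:=\big(\sup\sum_{i,j}|F([t_i,t_{i+1}]\times[u_j,u_{j+1}])|^\rho\big)^{1/\rho}$ over partitions of $[s,t]$ and $[u,v]$. The one-dimensional $\rho$-variation is $\|\phi\|_{\rho\text{-var};[0,1]}=(\sup\sum_i|\phi_{t_{i+1}}-\phi_{t_i}|^\rho)^{1/\rho}$.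 *)

(* Defs.v *)
From HB Require Import structures.
From mathcomp Require Import all_boot all_order all_algebra.
From mathcomp Require Import all_classical all_reals all_analysis.
Set Implicit Arguments. Unset Strict Implicit. Unset Printing Implicit Defensive.
Import Order.TTheory GRing.Theory Num.Theory.
Local Open Scope ring_scope.
Local Open Scope classical_set_scope.

Definition inner_product (R : realType) (V : lmodType R) (ip : V -> V -> R) : Prop :=
  [/\ (forall x y, ip x y = ip y x),
      (forall (a : R) x y z, ip (a *: x + y) z = a * ip x z + ip y z),
      (forall x, 0 <= ip x x) &
      (forall x, ip x x = 0 -> x = 0)].

Definition ip_norm (R : realType) (V : lmodType R) (ip : V -> V -> R) (x : V) : R :=
  Num.sqrt (ip x x).

(** Partitions of [a,b] follow mathcomp-analysis' [itv_partition a b s]: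
    the points are a < s_0 < s_1 < ... < last = b.  The point list is (a :: s). *)

Definition rho_sum (R : realType) (rho : R) (a b : R) (phi : R -> R) (s : seq R) : R :=
  let F := phi \o nth b (a :: s) in
  \sum_(0 <= k < size s) (`|F k.+1 - F k| `^ rho).

Definition pvar_pow (R : realType) (rho : R) (a b : R) (phi : R -> R) : \bar R :=
  ereal_sup [set (rho_sum rho a b phi s)%:E | s in [set s | itv_partition a b s]].

(** ||phi||_{rho-var;[a,b]} (meaningful when pvar_pow is finite) *)
Definition pvar (R : realType) (rho : R) (a b : R) (phi : R -> R) : R :=
  (fine (pvar_pow rho a b phi)) `^ (rho^-1).

Definition rect_incr (R : realType) (F : R -> R -> R) (a b c d : R) : R :=
  F b d - F a d - F b c + F a c.

Definition rho_sum2 (R : realType) (rho : R) (a b c d : R) (F : R -> R -> R)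
    (s u : seq R) : R :=
  let T := nth b (a :: s) in
  let U := nth d (c :: u) in
  \sum_(0 <= i < size s) \sum_(0 <= j < size u)
     (`|rect_incr F (T i) (T i.+1) (U j) (U j.+1)| `^ rho).

Definition pvar2_pow (R : realType) (rho : R) (a b c d : R) (F : R -> R -> R) : \bar R :=
  ereal_sup [set (rho_sum2 rho a b c d F su.1 su.2)%:E
            | su in [set su : seq R * seq R | itv_partition a b su.1 /\ itv_partition c d su.2]].

Definition pvar2 (R : realType) (rho : R) (a b c d : R) (F : R -> R -> R) : R :=
  (fine (pvar2_pow rho a b c d F)) `^ (rho^-1).

(* Main.v *)
Require Import Defs.
From HB Require Import structures.
From mathcomp Require Import all_boot all_order all_algebra.
From mathcomp Require Import all_classical all_reals all_analysis.
From mathcomp Require Import ring lra.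
Import Order.TTheory GRing.Theory Num.Theory.
Local Open Scope ring_scope.

Section Aux.
Context {R : realType}.

Lemma powR_invV (l p : R) : 0 < l -> (l^-1) `^ p = (l `^ p)^-1.
Proof.
move=> l0.
have h : l `^ p * (l^-1) `^ p = 1.
  by rewrite -powRM ?invr_ge0 ?ltW // mulfV ?gt_eqF // powR1.
have lp : 0 < l `^ p by rewrite powR_gt0.
by rewrite -[RHS]mulr1 -h mulrA mulVf ?gt_eqF // mul1r.
Qed.

Lemma powRK (X p : R) : 0 <= X -> 0 < p -> (X `^ p^-1) `^ p = X.
Proof.
by move=> X0 p0; rewrite -powRrM mulVf ?gt_eqF // powRr1.
Qed.

Lemma holder_seq (T : eqType) (r : seq T) (x y : T -> R) (p q : R) :
  0 < p -> 0 < q -> p^-1 + q^-1 = 1 ->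
  (forall k, 0 <= x k) -> (forall k, 0 <= y k) ->
  \sum_(k <- r) x k * y k <=
  (\sum_(k <- r) x k `^ p) `^ p^-1 * (\sum_(k <- r) y k `^ q) `^ q^-1.
Proof.
move=> p0 q0 pq x0 y0.
set X := \sum_(k <- r) x k `^ p; set Y := \sum_(k <- r) y k `^ q.
have X0 : 0 <= X by apply: sumr_ge0 => k _; exact: powR_ge0.
have Y0 : 0 <= Y by apply: sumr_ge0 => k _; exact: powR_ge0.
have rhs0 : 0 <= X `^ p^-1 * Y `^ q^-1 by rewrite mulr_ge0 ?powR_ge0.
case: (eqVneq X 0) => [XE|XN].
  have : forall k, k \in r -> x k = 0.
    move=> k kr; apply: (@powR_eq0_eq0 _ _ p).
    apply/eqP; rewrite eq_le powR_ge0 andbT -XE /X.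
    rewrite (big_rem k) //= lerDl; apply: sumr_ge0 => j _; exact: powR_ge0.
  move=> h; rewrite big_seq_cond (eq_bigr (fun=> 0)) ?big1 //.
  by move=> k /andP[kr _]; rewrite h // mul0r.
case: (eqVneq Y 0) => [YE|YN].
  have : forall k, k \in r -> y k = 0.
    move=> k kr; apply: (@powR_eq0_eq0 _ _ q).
    apply/eqP; rewrite eq_le powR_ge0 andbT -YE /Y.
    rewrite (big_rem k) //= lerDl; apply: sumr_ge0 => j _; exact: powR_ge0.
  move=> h; rewrite big_seq_cond (eq_bigr (fun=> 0)) ?big1 //.
  by move=> k /andP[kr _]; rewrite h // mulr0.
have Xp : 0 < X by rewrite lt_def XN X0.
have Yp : 0 < Y by rewrite lt_def YN Y0.
set l := X `^ p^-1; set m := Y `^ q^-1.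
have lp : 0 < l by rewrite powR_gt0.
have mp : 0 < m by rewrite powR_gt0.
have lP : l `^ p = X by rewrite powRK.
have mP : m `^ q = Y by rewrite powRK.
clearbody l m.
have step : forall k, x k * y k <=
   l * m * ((x k `^ p / X) / p + (y k `^ q / Y) / q).
  move=> k.
  have li : 0 <= l^-1 by rewrite invr_ge0 (ltW lp).
  have mi : 0 <= m^-1 by rewrite invr_ge0 (ltW mp).
  have := @conjugate_powR R (x k * l^-1) (y k * m^-1) p q
    (mulr_ge0 (x0 k) li) (mulr_ge0 (y0 k) mi) p0 q0 pq.
  rewrite (powRM _ (x0 k) li) (powRM _ (y0 k) mi) !powR_invV // lP mP => h.
  have -> : x k * y k = l * m * ((x k * l^-1) * (y k * m^-1)).
    by rewrite mulrACA [l * _]mulrC [m * _]mulrC !divfK ?(gt_eqF lp) ?(gt_eqF mp).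
  by apply: ler_wpM2l => //; exact: ltW (mulr_gt0 lp mp).
apply: le_trans (ler_sum _ (fun k _ => step k)) _.
rewrite -mulr_sumr big_split /= -!mulr_suml.
rewrite -/X -/Y mulfV ?gt_eqF // mulfV ?gt_eqF // !mul1r pq mulr1.
by [].
Qed.

Section IP.
Variables (V : lmodType R) (ip : V -> V -> R) (Hip : inner_product ip).

Lemma ip0l z : ip 0 z = 0.
Proof.
case: Hip => _ H _ _; have := H 1 0 0 z.
rewrite scaler0 addr0 mul1r => h.
by have := congr1 (fun t => t - ip 0 z) h; rewrite /= subrr addrK.
Qed.

Lemma ipDl x y z : ip (x + y) z = ip x z + ip y z.
Proof. by case: Hip => _ H _ _; have := H 1 x y z; rewrite scale1r mul1r. Qed.

Lemma ipZl a x z : ip (a *: x) z = a * ip x z.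
Proof. by case: Hip => _ H _ _; have := H a x 0 z; rewrite !addr0 ip0l addr0. Qed.

Lemma ipBl x y z : ip (x - y) z = ip x z - ip y z.
Proof. by rewrite ipDl -scaleN1r ipZl mulN1r. Qed.

Lemma ip_suml (I : Type) (r : seq I) (F : I -> V) z :
  ip (\sum_(i <- r) F i) z = \sum_(i <- r) ip (F i) z.
Proof.
elim: r => [|i r IH]; first by rewrite !big_nil ip0l.
by rewrite !big_cons ipDl IH.
Qed.

Lemma ipBr x y z : ip z (x - y) = ip z x - ip z y.
Proof. by case: Hip => Hs _ _ _; rewrite Hs ipBl !(Hs z). Qed.

Lemma ip_CS x y : ip x y ^+ 2 <= ip x x * ip y y.
Proof.
case: (Hip) => Hs H Hpos Hdef.
case: (eqVneq (ip x x) 0) => [/Hdef -> | xN].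
  by rewrite ip0l ip0l expr2 mulr0 mul0r.
have xp : 0 < ip x x by rewrite lt_def xN Hpos.
set a := ip x y; set b := - ip x x.
have h := Hpos (a *: x + b *: y).
rewrite ipDl !ipZl (Hs x) (Hs y) ipDl !ipZl ipDl !ipZl (Hs y x) -/a in h.
have e : a * (a * ip x x + b * a) + b * (a * a + b * ip y y)
       = ip x x * (ip x x * ip y y - a ^+ 2).
  by rewrite /b; ring.
rewrite e pmulr_rge0 // subr_ge0 in h.
exact: h.
Qed.
End IP.

Lemma powR_le (r x y : R) : 0 <= r -> 0 <= x -> x <= y -> x `^ r <= y `^ r.
Proof.
move=> r0 x0 xy; apply: (ge0_ler_powR r0) => //; rewrite nnegrE //.
exact: le_trans xy.
Qed.

Lemma abs_beta_q (p q d : R) : 0 < p -> 0 < q -> (p - 1) * q = p ->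
  `|Num.sg d * `|d| `^ (p - 1)| `^ q = `|d| `^ p.
Proof.
move=> p0 q0 pq; case: (eqVneq d 0) => [->|dN].
  by rewrite sgr0 mul0r normr0 !powR0 // gt_eqF.
rewrite normrM normr_sg dN mul1r ger0_norm ?powR_ge0 //.
by rewrite -powRrM pq.
Qed.

Lemma core (p N A : R) (m : nat) (D : nat -> R) (a : nat -> nat -> R) :
  1 <= p -> 0 <= N ->
  (forall b : nat -> R, (\sum_(0 <= i < m) b i * D i) ^+ 2 <=
      N * \sum_(0 <= i < m) \sum_(0 <= j < m) b i * b j * a i j) ->
  \sum_(0 <= i < m) \sum_(0 <= j < m) `|a i j| `^ p <= A ->
  ((\sum_(0 <= k < m) `|D k| `^ p) `^ p^-1) ^+ 2 <= N * A `^ p^-1.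
Proof.
move=> p1 N0 Hb HA.
have p0 : 0 < p by apply: lt_le_trans p1.
set S := \sum_(0 <= k < m) `|D k| `^ p.
have S0 : 0 <= S by apply: sumr_ge0 => k _; exact: powR_ge0.
have A0 : 0 <= A.
  apply: le_trans HA; apply: sumr_ge0 => i _; apply: sumr_ge0 => j _.
  exact: powR_ge0.
pose be k := Num.sg (D k) * `|D k| `^ (p - 1).
have hb : \sum_(0 <= i < m) be i * D i = S.
  apply: eq_bigr => k _; rewrite /be mulrAC -normrEsg mulr_powRB1 //.
have H1 := Hb be; rewrite hb in H1.
set s := S `^ p^-1.
have sS : S = s `^ p by rewrite /s powRK.
have s0 : 0 <= s by exact: powR_ge0.
clearbody s; clear hb.
have HQ : \sum_(0 <= i < m) \sum_(0 <= j < m) be i * be j * a i j <=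
          \sum_(0 <= i < m) \sum_(0 <= j < m) `|a i j| * (`|be i| * `|be j|).
  apply: ler_sum => i _; apply: ler_sum => j _.
  by rewrite mulrC -!normrM mulrA ler_norm.
have Hmain : \sum_(0 <= i < m) \sum_(0 <= j < m) `|a i j| * (`|be i| * `|be j|)
   <= A `^ p^-1 * (s `^ (p - 1) * s `^ (p - 1)).
  case: (eqVneq p 1) => [pE|pN].
    rewrite pE subrr powRr0 !mulr1 invr1 powRr1 //.
    apply: le_trans HA; apply: ler_sum => i _; apply: ler_sum => j _.
    rewrite pE powRr1 // ler_piMr //.
    rewrite /be !normrM pE subrr !powRr0 !normr1 !mulr1 !normr_sg.
    by rewrite mulr_ile1 // ?ler0n // lern1 leq_b1.
  have pg : 1 < p by rewrite lt_def pN p1.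
  have pm0 : 0 < p - 1 by rewrite subr_gt0.
  set q := p / (p - 1).
  have q0 : 0 < q by rewrite divr_gt0.
  have pq : p^-1 + q^-1 = 1.
    by rewrite /q invf_div; field; rewrite gt_eqF.
  have pq' : (p - 1) * q = p by rewrite /q mulrC divfK // gt_eqF.
  pose r := [seq (i, j) | i <- index_iota 0 m, j <- index_iota 0 m].
  pose x (k : nat * nat) : R := `|a k.1 k.2|.
  pose y (k : nat * nat) : R := `|be k.1| * `|be k.2|.
  have := holder_seq _ r x y p q p0 q0 pq (fun k => normr_ge0 _)
    (fun k => mulr_ge0 (normr_ge0 _) (normr_ge0 _)).
  rewrite /r !big_allpairs /x /y /= => h; apply: le_trans h _.
  apply: ler_pM.
  - exact: powR_ge0.
  - exact: powR_ge0.
  - apply: powR_le => //; first by rewrite invr_ge0 ltW.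
    by apply: sumr_ge0 => i _; apply: sumr_ge0 => j _; exact: powR_ge0.
  have -> : \sum_(i <- index_iota 0 m) \sum_(j <- index_iota 0 m)
      (`|be i| * `|be j|) `^ q = S * S.
    rewrite mulr_suml; apply: eq_bigr => i _; rewrite mulr_sumr.
    apply: eq_bigr => j _; rewrite powRM ?normr_ge0 //.
    by rewrite /be !abs_beta_q.
  rewrite powRM // sS -!powRrM.
  have -> : p * q^-1 = p - 1 by rewrite /q invf_div mulrC divfK // gt_eqF.
  by [].
have HS : S ^+ 2 = (s `^ (p - 1) * s `^ (p - 1)) * s ^+ 2.
  rewrite sS.
  have -> : s `^ p = s `^ (p - 1) * s.
    have e1 : s `^ (p - 1 + 1) = s `^ (p - 1) * s `^ 1.
      by apply: powRD; rewrite subrK gt_eqF.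
    by rewrite subrK powRr1 // in e1.
  by rewrite exprMn expr2.
case: (eqVneq s 0) => [->|sN].
  by rewrite expr0n /= mulr_ge0 ?powR_ge0.
have sp : 0 < s by rewrite lt_def sN s0.
set c := s `^ (p - 1) * s `^ (p - 1).
have cp : 0 < c by rewrite mulr_gt0 ?powR_gt0.
have h := le_trans H1 (ler_wpM2l N0 (le_trans HQ Hmain)).
rewrite HS in h.
have e : s ^+ 2 * c = c * s ^+ 2 by rewrite mulrC.
rewrite -(ler_pM2r cp) e; apply: le_trans h _.
by rewrite /c !mulrA.
Qed.

Lemma key (V : lmodType R) (ip : V -> V -> R) (n : nat) (f : R -> V) (rho : R)
  (phi0 : V) (Pr : R) :
  inner_product ip -> 1 <= rho ->
  (forall s u, itv_partition 0 1 s -> itv_partition 0 1 u ->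
     rho_sum2 rho 0 1 0 1 (fun s t => (n`!)%:R * ip (f s) (f t)) s u <= Pr) ->
  forall s, itv_partition 0 1 s ->
  ((rho_sum rho 0 1 (fun t => ip (f t) phi0) s) `^ rho^-1) ^+ 2
     <= ip phi0 phi0 * Pr `^ rho^-1.
Proof.
move=> Hip p1 HP s hs.
have Hip' := Hip; case: Hip' => Hs _ Hpos _.
rewrite /rho_sum /=.
pose T := nth 1 (0 :: s).
pose a i j := ip (f (T i.+1) - f (T i)) (f (T j.+1) - f (T j)).
apply: (core rho (ip phi0 phi0) Pr (size s)
  (fun k => ip (f (T k.+1)) phi0 - ip (f (T k)) phi0) a p1 (Hpos phi0)).
- move=> b.
  pose X := \sum_(0 <= i < size s) b i *: (f (T i.+1) - f (T i)).
  have eX : \sum_(0 <= i < size s) b i * (ip (f (T i.+1)) phi0 - ip (f (T i)) phi0)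
      = ip X phi0.
    rewrite (ip_suml _ _ Hip); apply: eq_bigr => i _.
    by rewrite (ipZl _ _ Hip) (ipBl _ _ Hip).
  have eQ : ip X X = \sum_(0 <= i < size s) \sum_(0 <= j < size s) b i * b j * a i j.
    rewrite {1}/X (ip_suml _ _ Hip); apply: eq_bigr => i _.
    rewrite (ipZl _ _ Hip) (Hs _ X) /X (ip_suml _ _ Hip) mulr_sumr.
    apply: eq_bigr => j _; rewrite (ipZl _ _ Hip) mulrA /a; congr (_ * _).
    exact: Hs.
  by rewrite eX -eQ mulrC; exact: (ip_CS _ _ Hip).
- apply: le_trans (HP s s hs hs); rewrite /rho_sum2 /=.
  apply: ler_sum => i _; apply: ler_sum => j _.
  apply: powR_le => //; first by apply: le_trans p1.
  rewrite /rect_incr /a -/T.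
  set x1 := T i; set x2 := T i.+1; set y1 := T j; set y2 := T j.+1.
  have -> : (n`!)%:R * ip (f x2) (f y2) - (n`!)%:R * ip (f x1) (f y2) -
            (n`!)%:R * ip (f x2) (f y1) + (n`!)%:R * ip (f x1) (f y1) =
            (n`!)%:R * ip (f x2 - f x1) (f y2 - f y1).
    by rewrite (ipBl _ _ Hip) !(ipBr _ _ Hip); ring.
  rewrite normrM (ger0_norm (ler0n _ _)) ler_peMl //.
  by rewrite ler1n fact_gt0.
Qed.
End Aux.

Theorem mainTheorem2 (R : realType) (V : lmodType R) (ip : V -> V -> R)
  (n : nat) (f : R -> V) (rho : R) :
  inner_product ip ->
  (0 < n)%N ->
  1 <= rho -> rho < 3 / 2 ->
  let Rcov := fun s t => (n`!)%:R * ip (f s) (f t) in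
  (pvar2_pow rho 0 1 0 1 Rcov < +oo)%E ->
  (forall s t, 0 <= s -> s <= t -> t <= 1 ->
     (pvar2_pow rho s t s t Rcov <= (`|t - s|)%:E)%E) ->
  exists C : R, forall phi0 : V,
    let phi := fun t => ip (f t) phi0 in
    (pvar_pow rho 0 1 phi < +oo)%E /\
    pvar rho 0 1 phi <= C * ip_norm ip phi0 * Num.sqrt (pvar2 rho 0 1 0 1 Rcov).
Proof.
move=> Hip n0 p1 p32 Rcov HRfin Hsq.
exists 1 => phi0 phi.
have Hip' := Hip; case: Hip' => _ _ Hpos _.
have p0 : 0 < rho by apply: lt_le_trans p1.
have part1 : itv_partition (0 : R) 1 [:: 1] by apply: itv_partition1; exact: ltr01.
have Pge : ((rho_sum2 rho 0 1 0 1 Rcov [:: 1] [:: 1])%:E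
             <= pvar2_pow rho 0 1 0 1 Rcov)%E.
  by apply: ereal_sup_ubound; exists ([:: 1], [:: 1]).
have [Pr PE] : exists Pr, pvar2_pow rho 0 1 0 1 Rcov = Pr%:E.
  move: Pge HRfin; case: (pvar2_pow rho 0 1 0 1 Rcov) => [r _ _|//|//].
  by exists r.
have HP : forall s u, itv_partition 0 1 s -> itv_partition 0 1 u ->
     rho_sum2 rho 0 1 0 1 (fun s t => (n`!)%:R * ip (f s) (f t)) s u <= Pr.
  move=> s u hs hu; rewrite -lee_fin -PE; apply: ereal_sup_ubound.
  by exists (s, u).
set M := ip_norm ip phi0 * Num.sqrt (pvar2 rho 0 1 0 1 Rcov).
have M0 : 0 <= M by rewrite /M mulr_ge0 ?sqrtr_ge0.
have pvar2E : pvar2 rho 0 1 0 1 Rcov = Pr `^ rho^-1 by rewrite /pvar2 PE.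
have rs0 : forall s, 0 <= rho_sum rho 0 1 phi s.
  by move=> s; rewrite /rho_sum; apply: sumr_ge0 => k _; exact: powR_ge0.
have Hs : forall s, itv_partition 0 1 s -> rho_sum rho 0 1 phi s <= M `^ rho.
  move=> s hs.
  have h := key _ _ _ _ _ phi0 _ Hip p1 HP s hs.
  have hS : (rho_sum rho 0 1 phi s) `^ rho^-1 <= M.
    rewrite /M /ip_norm pvar2E -sqrtrM ?Hpos //.
    rewrite -(ger0_norm (powR_ge0 (rho_sum rho 0 1 phi s) rho^-1)) -sqrtr_sqr.
    by rewrite ler_sqrt // mulr_ge0 ?powR_ge0.
  rewrite -(powRK _ _ (rs0 s) p0).
  by apply: powR_le => //; [exact: ltW | exact: powR_ge0].
have Hpv : (pvar_pow rho 0 1 phi <= (M `^ rho)%:E)%E.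
  apply: ge_ereal_sup => y [s hs <-]; rewrite lee_fin; exact: Hs.
have Hpv0 : ((rho_sum rho 0 1 phi [:: 1])%:E <= pvar_pow rho 0 1 phi)%E.
  by apply: ereal_sup_ubound; exists [:: 1].
split; first exact: le_lt_trans Hpv (ltry _).
rewrite mul1r -/M /pvar; move: Hpv Hpv0; case: (pvar_pow rho 0 1 phi) => [r| |] //=.
rewrite !lee_fin => h1 h2.
have r0 : 0 <= r by apply: le_trans h2.
have ri : 0 <= rho^-1 by rewrite invr_ge0 (ltW p0).
apply: le_trans (powR_le _ _ _ ri r0 h1) _.
by rewrite -powRrM mulfV ?gt_eqF // powRr1.
Qed.
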